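(* Let $k$ be a symmetric positive semidefinite kernel on $\mathbb{R}^d$, $\sigma_n^2>0$, and let $\mathbb{D}_N^x=\{\bm{x}^{(i)}\}_{i=1}^N$ be an input training data set with GP posterior variance $\sigma_N^2(\cdot)$. For $\bm{x}\in\mathbb{R}^d$ and $\rho>0$ let $\mathbb{B}_\rho(\bm{x})=\{\bm{x}'\in\mathbb{D}_N^x:\|\bm{x}'-\bm{x}\|\le\rho\}$ and suppose $|\mathbb{B}_\rho(\bm{x})|\ge1$. Then $$\sigma_N^2(\bm{x})\le\frac{k(\bm{x},\bm{x})\sigma_n^2+|\mathbb{B}_\rho(\bm{x})|\,\xi(\bm{x},\rho)}{|\mathbb{B}_\rho(\bm{x})|\max_{\bm{x}',\bm{x}''\in\mathbb{B}_\rho(\bm{x})}k(\bm{x}',\bm{x}'')+\sigma_n^2},$$ where $\xi(\bm{x},\rho)=k(\bm{x},\bm{x})\max_{\bm{x}',\bm{x}''\in\mathbb{B}_\rho(\bm{x})}k(\bm{x}',\bm{x}'')-\min_{\bm{x}'\in\mathbb{B}_\rho(\bm{x})}k(\bm{x}',\bm{x})^2$.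
   Context: Gaussian process posterior variance: with $K_{N,ij}=k(\bm{x}^{(i)},\bm{x}^{(j)})$, $k_{N,i}(\bm{x})=k(\bm{x},\bm{x}^{(i)})$, $\bm{A}_N=\bm{K}_N+\sigma_n^2\bm{I}_N$, $\sigma_N^2(\bm{x})=k(\bm{x},\bm{x})-\bm{k}_N(\bm{x})^T\bm{A}_N^{-1}\bm{k}_N(\bm{x})$. $|\cdot|$ denotes cardinality (counted with multiplicity). *)

(* Defs.v *)
(* real closed field R (generalizes the reals; statement is algebraic). *)
From HB Require Import structures.
From mathcomp Require Import all_boot all_order all_algebra.
Set Implicit Arguments. Unset Strict Implicit. Unset Printing Implicit Defensive.
Import Order.TTheory GRing.Theory Num.Theory.
Local Open Scope ring_scope.

Section Defs.
Variables (R : rcfType) (d : nat).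
Notation pt := 'rV[R]_d.

Definition eucl_norm (v : pt) : R := Num.sqrt (\sum_(j < d) (v 0 j) ^+ 2).

Definition kernel_symmetric (k : pt -> pt -> R) : Prop := forall x y, k x y = k y x.

Definition gram (k : pt -> pt -> R) (m : nat) (X : 'I_m -> pt) : 'M[R]_m :=
  \matrix_(i < m, j < m) k (X i) (X j).

Definition kernel_psd (k : pt -> pt -> R) : Prop :=
  forall (m : nat) (X : 'I_m -> pt) (c : 'cV[R]_m),
    0 <= (c^T *m gram k X *m c) 0 0.

Definition kvec (k : pt -> pt -> R) (N : nat) (X : 'I_N -> pt) (x : pt) : 'cV[R]_N :=
  \col_(i < N) k x (X i).

Definition post_var (k : pt -> pt -> R) (sn2 : R) (N : nat) (X : 'I_N -> pt) (x : pt) : R :=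
  k x x - ((kvec k X x)^T *m invmx (gram k X + sn2%:M) *m kvec k X x) 0 0.

(* B_rho(x) as a set of indices (so cardinality counts multiplicity) *)
Definition ball_idx (N : nat) (X : 'I_N -> pt) (x : pt) (rho : R) : {set 'I_N} :=
  [set i | eucl_norm (X i - x) <= rho].

(* max / min of a nonempty finite list (head as seed, which is in the list) *)
Definition seq_max (s : seq R) : R := \big[Num.max/head 0 s]_(v <- s) v.
Definition seq_min (s : seq R) : R := \big[Num.min/head 0 s]_(v <- s) v.

Definition ball_kmax (k : pt -> pt -> R) (N : nat) (X : 'I_N -> pt) (x : pt) (rho : R) : R :=
  seq_max [seq k (X i) (X j) | i <- enum (ball_idx X x rho), j <- enum (ball_idx X x rho)].

Definition ball_kmin_sq (k : pt -> pt -> R) (N : nat) (X : 'I_N -> pt) (x : pt) (rho : R) : R :=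
  seq_min [seq (k (X i) x) ^+ 2 | i <- enum (ball_idx X x rho)].

Definition xi (k : pt -> pt -> R) (N : nat) (X : 'I_N -> pt) (x : pt) (rho : R) : R :=
  k x x * ball_kmax k X x rho - ball_kmin_sq k X x rho.

End Defs.

(* Main.v *)
Require Import Defs.
From HB Require Import structures.
From mathcomp Require Import all_boot all_order all_algebra.
From mathcomp Require Import ring lra.
Import Order.TTheory GRing.Theory Num.Theory.
Local Open Scope ring_scope.

Lemma lin_entry (R : rcfType) n (c b : 'cV[R]_n) :
  (c^T *m b) 0 0 = \sum_i c i 0 * b i 0.
Proof. by rewrite mxE; apply: eq_bigr => i _; rewrite mxE. Qed.

Lemma quad_entry (R : rcfType) n (c : 'cV[R]_n) (A : 'M[R]_n) :
  (c^T *m A *m c) 0 0 = \sum_j \sum_i c i 0 * A i j * c j 0.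
Proof.
rewrite mxE; apply: eq_bigr => j _; rewrite mxE big_distrl /=.
by apply: eq_bigr => i _; rewrite mxE.
Qed.

Lemma big_max_ge (R : rcfType) (x0 : R) (s : seq R) v :
  v \in s -> v <= \big[Num.max/x0]_(w <- s) w.
Proof.
elim: s => [//|a s IH]; rewrite in_cons big_cons le_max.
by case/orP => [/eqP ->|/IH ->]; rewrite ?lexx ?orbT.
Qed.

Lemma big_min_le (R : rcfType) (x0 : R) (s : seq R) v :
  v \in s -> \big[Num.min/x0]_(w <- s) w <= v.
Proof.
elim: s => [//|a s IH]; rewrite in_cons big_cons ge_min.
by case/orP => [/eqP ->|/IH ->]; rewrite ?lexx ?orbT.
Qed.

Lemma seq_min_ge0 (R : rcfType) (s : seq R) :
  (forall v, v \in s -> 0 <= v) -> 0 <= seq_min s.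
Proof.
move=> H; rewrite /seq_min big_seq; apply: (big_ind (fun w => 0 <= w)).
- by case: s H => [|a s] H //=; apply: H; rewrite mem_head.
- by move=> a b ha hb; rewrite le_min ha hb.
- by move=> i /H.
Qed.

Lemma var_ineq (R : rcfType) n (A : 'M[R]_n) (b c : 'cV[R]_n) : A^T = A -> A \in unitmx ->
  (forall y : 'cV_n, 0 <= (y^T *m A *m y) 0 0) ->
  2 * (c^T *m b) 0 0 - (c^T *m A *m c) 0 0 <= (b^T *m invmx A *m b) 0 0.
Proof.
move=> As Au H.
have := H (invmx A *m b - c).
have -> : (invmx A *m b - c)^T = b^T *m invmx A - c^T.
  by rewrite [LHS]linearB /= trmx_mul trmx_inv As.
rewrite mulmxBl mulmxBr !mulmxBl.
rewrite -[b^T *m invmx A *m A](mulmxA) mulVmx // mulmx1.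
rewrite -[c^T *m A *m (invmx A *m b)]mulmxA [A *m (invmx A *m b)]mulmxA mulmxV // mul1mx.
have e : (b^T *m c) 0 0 = (c^T *m b) 0 0.
  by rewrite !lin_entry; apply: eq_bigr => i _; rewrite mulrC.
move: e; rewrite mulmxA.
set P := b^T *m invmx A *m b; set Q := c^T *m b; set S := b^T *m c; set T := c^T *m A *m c.
clearbody P Q S T; move=> e; rewrite !mxE e; lra.
Qed.

Section K.
Variables (R : rcfType) (d : nat) (k : 'rV[R]_d -> 'rV[R]_d -> R).
Hypotheses (ksym : kernel_symmetric k) (kpsd : kernel_psd k).

Lemma k_two (p q : 'rV[R]_d) (s : R) :
  0 <= k p p + s * k p q + s * k q p + s * s * k q q.
Proof.
pose X2 := fun l : 'I_2 => if l == ord0 then p else q.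
pose c : 'cV[R]_2 := \col_(l < 2) (if l == ord0 then 1 else s).
have := @kpsd 2 X2 c; rewrite quad_entry !big_ord_recl !big_ord0 !mxE /=.
rewrite /X2 /=.
set a := k p p. set b := k p q. set b' := k q p. set e := k q q.
move=> H; lra.
Qed.

Lemma k_abs (p q : 'rV[R]_d) : 2 * `|k p q| <= k p p + k q q.
Proof.
have h1 := k_two p q 1; have h2 := k_two p q (-1).
rewrite (ksym q p) in h1 h2.
case: (lerP 0 (k p q)) => h; [rewrite ger0_norm // | rewrite ltr0_norm //]; lra.
Qed.

Lemma k_diag (p : 'rV[R]_d) : 0 <= k p p.
Proof. have := k_abs p p; have := normr_ge0 (k p p); lra. Qed.


Variables (N : nat) (X : 'I_N -> 'rV[R]_d) (sn2 : R).

Lemma A_sym : (gram k X + sn2%:M)^T = gram k X + sn2%:M.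
Proof. by apply/matrixP => i j; rewrite !mxE ksym eq_sym. Qed.

Lemma sq_entry (y : 'cV[R]_N) : (y^T *m y) 0 0 = \sum_i y i 0 ^+ 2.
Proof. by rewrite lin_entry; apply: eq_bigr => i _; rewrite expr2. Qed.

Lemma A_quad (y : 'cV[R]_N) : (y^T *m (gram k X + sn2%:M) *m y) 0 0 =
  (y^T *m gram k X *m y) 0 0 + sn2 * (y^T *m y) 0 0.
Proof.
rewrite mulmxDr mulmxDl mul_mx_scalar -scalemxAl.
set P := y^T *m gram k X *m y; set Q := y^T *m y; clearbody P Q.
by rewrite !mxE.
Qed.

Lemma A_psd (y : 'cV[R]_N) : 0 < sn2 -> 0 <= (y^T *m (gram k X + sn2%:M) *m y) 0 0.
Proof.
move=> hs; rewrite A_quad sq_entry; apply: addr_ge0; first exact: kpsd.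
by apply: mulr_ge0; [exact: ltW | apply: sumr_ge0 => i _; exact: sqr_ge0].
Qed.

Lemma A_unit : 0 < sn2 -> gram k X + sn2%:M \in unitmx.
Proof.
move=> hs; rewrite unitmxE unitfE; apply/det0P => -[v vn0 vA].
have h := A_quad v^T; rewrite trmxK vA mul0mx mxE in h.
have h1 : 0 <= (v *m gram k X *m v^T) 0 0 by have := @kpsd N X v^T; rewrite trmxK.
have h2 : (v *m v^T) 0 0 = 0.
  have h3 : 0 <= (v *m v^T) 0 0 by have := sq_entry v^T; rewrite trmxK => ->; apply: sumr_ge0 => i _; exact: sqr_ge0.
  apply/eqP; rewrite eq_le h3 andbT; rewrite -(pmulr_rle0 _ hs); lra.
move: vn0; have := sq_entry v^T; rewrite trmxK h2 => /esym /eqP.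
rewrite psumr_eq0; last by move=> i _; exact: sqr_ge0.
move=> /allP H; case/negP; apply/eqP/matrixP => i j; rewrite (ord1 i) mxE.
by have := H j (mem_index_enum _); rewrite mxE sqrf_eq0 => /eqP.
Qed.

End K.

Arguments A_sym {R d k} ksym {N} X sn2.
Arguments A_unit {R d k} kpsd {N} X {sn2} _.
Arguments A_psd {R d k} kpsd {N} X {sn2} y _.
Arguments var_ineq {R n A} b c _ _ _.

Theorem mainTheorem10 (R : rcfType) (d : nat) (k : 'rV[R]_d -> 'rV[R]_d -> R)
  (sn2 : R) (N : nat) (X : 'I_N -> 'rV[R]_d) (x : 'rV[R]_d) (rho : R) :
  kernel_symmetric k -> kernel_psd k -> 0 < sn2 -> 0 < rho ->
  (1 <= #|ball_idx X x rho|)%N ->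
  post_var k sn2 X x <=
    (k x x * sn2 + (#|ball_idx X x rho|)%:R * xi k X x rho) /
    ((#|ball_idx X x rho|)%:R * ball_kmax k X x rho + sn2).
Proof.
move=> ksym kpsd hs hrho hM.
rewrite /xi /post_var.
set B := ball_idx X x rho.
set kmax := ball_kmax k X x rho.
set kmin := ball_kmin_sq k X x rho.
set M : R := (#|B|)%:R.
have Mpos : 0 < M by rewrite ltr0n.
have kmaxb : forall i j, i \in B -> j \in B -> `|k (X i) (X j)| <= kmax.
  move=> i j hi hj.
  have hle : forall a b, a \in B -> b \in B -> k (X a) (X b) <= kmax.
    move=> a b ha hb; apply: big_max_ge.
    by apply: (allpairs_f (fun i j => k (X i) (X j))); rewrite mem_enum.
  have := @k_abs _ _ k ksym kpsd (X i) (X j).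
  have := hle i i hi hi; have := hle j j hj hj; lra.
have kmax0 : 0 <= kmax.
  case/card_gt0P: hM => i0 hi0.
  have := kmaxb i0 i0 hi0 hi0; have := normr_ge0 (k (X i0) (X i0)); lra.
set D := M * kmax + sn2.
have Dpos : 0 < D by rewrite /D; apply: ltr_wpDl => //; apply: mulr_ge0 => //; exact: ltW.
have kmin0 : 0 <= kmin.
  by apply: seq_min_ge0 => v /mapP [i _ ->]; exact: sqr_ge0.
have kminle : forall i, i \in B -> kmin <= k x (X i) ^+ 2.
  move=> i hi; rewrite ksym; apply: big_min_le.
  by apply: (map_f (fun i => k (X i) x ^+ 2)); rewrite mem_enum.
set m := Num.sqrt kmin.
have m0 : 0 <= m := sqrtr_ge0 _.
have mle : forall i, i \in B -> m <= `|k x (X i)|.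
  by move=> i hi; rewrite -sqrtr_sqr ler_sqrt ?sqr_ge0 //; exact: kminle.
have m2 : kmin = m ^+ 2 by rewrite sqr_sqrtr.
set t := m / D.
have t0 : 0 <= t by apply: divr_ge0 => //; exact: ltW.
set b := kvec k X x.
pose sg (i : 'I_N) : R := if 0 <= b i 0 then 1 else -1.
pose c : 'cV[R]_N := \col_i (t * sg i * (i \in B)%:R).
have sumB : \sum_i ((i \in B)%:R : R) = M.
  rewrite /M -sum1_card natr_sum [RHS]big_mkcond /=; apply: eq_bigr => i _.
  by case: (i \in B).
have hvar := var_ineq b c (A_sym ksym X sn2) (A_unit kpsd X hs)
  (fun y => A_psd kpsd X y hs).
have cb : t * m * M <= (c^T *m b) 0 0.
  rewrite lin_entry -sumB big_distrr /=; apply: ler_sum => i _.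
  have hsg : sg i * b i 0 = `|b i 0|.
    rewrite /sg; case: ifP => h; first by rewrite ger0_norm // mul1r.
    by rewrite ltr0_norm ?mulN1r // ltNge h.
  rewrite mxE; case hi: (i \in B); rewrite /= ?mulr0n ?mulr1n ?mulr0 ?mul0r //.
  have := mle i hi; rewrite /b mxE in hsg *; move: hsg.
  set K := k x (X i); set g := sg i => hsg hm.
  have hh : 0 <= t * (`|K| - m) by apply: mulr_ge0 => //; rewrite subr_ge0.
  nra.
have sgb : forall i, sg i * sg i = 1.
  by move=> i; rewrite /sg; case: ifP => _; rewrite ?mulN1r ?opprK ?mul1r.
have cAc : (c^T *m (gram k X + sn2%:M) *m c) 0 0 <= t ^+ 2 * (kmax * M ^+ 2 + sn2 * M).
  rewrite A_quad quad_entry sq_entry mulrDr; apply: lerD.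
    apply: (@le_trans _ _ (\sum_(j < N) \sum_(i < N) (t ^+ 2 * kmax * (j \in B)%:R) * (i \in B)%:R)).
      apply: ler_sum => j _; apply: ler_sum => i _; rewrite !mxE.
      case hi: (i \in B); case hj: (j \in B); rewrite /= ?mulr0n ?mulr1n ?mulr0 ?mul0r //.
      have hk := kmaxb i j hi hj.
      set K := k (X i) (X j) in hk *.
      have n1 := ler_norm K; have n2 := ler_norm (- K); rewrite normrN in n2.
      have hsK : sg i * (sg j * K) <= kmax.
        by rewrite /sg; case: ifP => _; case: ifP => _; lra.
      have -> : t * sg i * 1 * K * (t * sg j * 1) = t ^+ 2 * (sg i * (sg j * K)) by ring.
      have hh : 0 <= t ^+ 2 * (kmax - sg i * (sg j * K)) by apply: mulr_ge0; [exact: sqr_ge0 | rewrite subr_ge0].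
      lra.
    under eq_bigr do rewrite -big_distrr /= sumB.
    rewrite -big_distrl /= -big_distrr /= sumB; rewrite le_eqVlt; apply/orP; left; apply/eqP; ring.
  rewrite mulrCA.
  rewrite ler_wpM2l ?(ltW hs) // -sumB big_distrr /=; apply: ler_sum => i _; rewrite mxE.
  case hi: (i \in B); rewrite /= ?mulr0n ?mulr1n ?mulr0 ?mul0r ?expr0n //.
  have := sgb i; nra.
set Q := (b^T *m invmx (gram k X + sn2%:M) *m b) 0 0.
set L := 2 * (t * m * M) - t ^+ 2 * (kmax * M ^+ 2 + sn2 * M).
have LQ : L <= Q.
  rewrite /L; move: hvar cb cAc; rewrite -/Q; set u := (c^T *m b) 0 0; set v := (_ *m c) 0 0. lra.
have key : L * D = M * m ^+ 2.
  rewrite /L /t /D; field; exact: lt0r_neq0.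
have QD : M * m ^+ 2 <= Q * D by rewrite -key ler_wpM2r // ltW.
rewrite ler_pdivlMr // m2; move: QD; rewrite /D; nra.
Qed.
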